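(* Let $d\in\mathbb{N}$, $d>1$, and write $a:=\lceil\log_2d\rceil$. For any $0<\epsilon\le\frac{3^{a}-1}{3^{a-1}-1}$ (read as $+\infty$ when $3^{a-1}-1=0$), there exists a ReLU FNN function $f^{(mtp)}_{FF,d}:\mathbb{R}^d\to\mathbb{R}$ with width $21\cdot2^{a-1}$, depth $C\ln\frac{3^{a}-1}{2\epsilon}$ and weight bound $C$, where $C$ is a constant independent of $\epsilon$, such that for all $\boldsymbol x\in[0,1]^d$, $$|f^{(mtp)}_{FF,d}(\boldsymbol x)-x_1\cdots x_d|\le\epsilon.$$
   Context: ReLU FNN of depth $L$, width $W$: $f_0=x$, $f_l=\sigma_R(W_lf_{l-1}+b_l)$ ($1\le l\le L-1$), $f=W_Lf_{L-1}+b_L$ with hidden layers of width $W$, $\sigma_R(x)=\max\{x,0\}$; the weight bound is the maximum absolute value of all weights and biases. *)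

(* Defs.v *)
From HB Require Import structures.
From mathcomp Require Import all_boot all_order all_algebra.
From mathcomp Require Import all_classical all_reals all_analysis.
Set Implicit Arguments. Unset Strict Implicit. Unset Printing Implicit Defensive.
Import Order.TTheory GRing.Theory Num.Theory.
Local Open Scope ring_scope.

Definition relu {R : realType} (t : R) : R := Num.max t 0.

(* Layer widths of a ReLU FNN with input dimension d, hidden width W and
   depth L (L affine maps): layer 0 = input (dim d), layers 1..L-1 hidden
   (dim W), layer L = output (dim 1). *)
Definition layer_dim (d W L l : nat) : nat :=
  if l == 0%N then d else if (l < L)%N then W else 1%N.

(* Weights:  w l i j = entry (i,j) of W_l,  b l i = entry i of b_l  (1 <= l <= L).
   Only the entries with i < layer_dim l, j < layer_dim (l-1) are used. *)
Fixpoint fnn_hidden {R : realType} (d W L : nat)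
  (w : nat -> nat -> nat -> R) (b : nat -> nat -> R) (x : nat -> R) (l : nat)
  : nat -> R :=
  match l with
  | 0%N => x
  | l'.+1 => fun i =>
      relu (\sum_(j < layer_dim d W L l') w l'.+1 i j * fnn_hidden d W L w b x l' j
            + b l'.+1 i)
  end.

Definition fnn_eval {R : realType} (d W L : nat)
  (w : nat -> nat -> nat -> R) (b : nat -> nat -> R) (x : nat -> R) : R :=
  \sum_(j < layer_dim d W L L.-1) w L 0%N j * fnn_hidden d W L w b x L.-1 j
  + b L 0%N.

Definition fnn_weight_bounded {R : realType} (d W L : nat)
  (w : nat -> nat -> nat -> R) (b : nat -> nat -> R) (B : R) : Prop :=
  forall l, (1 <= l <= L)%N -> forall i, (i < layer_dim d W L l)%N ->
    `|b l i| <= B /\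
    forall j, (j < layer_dim d W L l.-1)%N -> `|w l i j| <= B.

(* a = ceil(log_2 d): smallest e with d <= 2^e *)
Definition mtp_a (d : nat) : nat := up_log 2 d.

(* Main.v *)
Require Import Defs.
From HB Require Import structures.
From mathcomp Require Import all_boot all_order all_algebra.
From mathcomp Require Import all_classical all_reals all_analysis.
From mathcomp Require Import ring lra zify.
Import Order.TTheory GRing.Theory Num.Theory.
Local Open Scope ring_scope.
Set Implicit Arguments. Unset Strict Implicit.

Section Math.
Variable R : realType.

Lemma relu_id (t : R) : 0 <= t -> relu t = t.
Proof. by move=> h; rewrite /relu max_l. Qed.
Lemma relu_0 (t : R) : t <= 0 -> relu t = 0.
Proof. by move=> h; rewrite /relu max_r. Qed.
Lemma relu_ge0 (t : R) : 0 <= relu t.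
Proof. by rewrite /relu le_max lexx orbT. Qed.

Definition T (t : R) : R := 2 * relu t - 4 * relu (t - 1/2).
Fixpoint Tn (n : nat) (t : R) : R := if n is n'.+1 then T (Tn n' t) else t.
Fixpoint fsq (n : nat) (z : R) : R :=
  if n is n'.+1 then fsq n' z - Tn n'.+1 z / 4 ^+ n'.+1 else z.
Definition q (t : R) := t * (1 - t).

Lemma T_cases (t : R) : 0 <= t <= 1 ->
  (t <= 1/2 /\ T t = 2 * t) \/ (1/2 <= t /\ T t = 2 - 2 * t).
Proof.
move=> /andP[h0 h1]; rewrite /T relu_id //.
case: (lerP t (1/2)) => ht.
  by left; rewrite relu_0 ?subr_le0 //; split => //; lra.
by right; rewrite relu_id; [split; [lra|lra] | lra].
Qed.

Lemma T01 (t : R) : 0 <= t <= 1 -> 0 <= T t <= 1.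
Proof. move=> h; case: (T_cases h) => -[h1 ->]; move/andP: h => [? ?]; apply/andP; split; lra. Qed.

Lemma T_q (t : R) : 0 <= t <= 1 -> 4 * q t = T t + q (T t).
Proof. move=> h; rewrite /q; case: (T_cases h) => -[h1 ->]; ring. Qed.

Lemma Tn01 n (z : R) : 0 <= z <= 1 -> 0 <= Tn n z <= 1.
Proof. by move=> h; elim: n => //= n IH; apply: T01. Qed.

Lemma fsq_eq n (z : R) : 0 <= z <= 1 -> fsq n z = z ^+ 2 + q (Tn n z) / 4 ^+ n.
Proof.
move=> h; elim: n => [|n IH] /=; first by rewrite /q expr0 divr1; ring.
rewrite IH /=.
have e : q (T (Tn n z)) = 4 * q (Tn n z) - T (Tn n z) by rewrite (T_q (Tn01 n h)); ring.
rewrite e [(4:R) ^+ n.+1]exprS.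
have h4 : (4 : R) ^+ n != 0 by rewrite expf_neq0 // pnatr_eq0.
move: h4; set X := (4 : R) ^+ n => h4.
by field.
Qed.


Lemma q_bnd (t : R) : 0 <= t <= 1 -> 0 <= q t <= 1/4.
Proof. move=> /andP[h0 h1]; rewrite /q; have := sqr_ge0 (t - 1/2); rewrite expr2 => ?; apply/andP; split; nra. Qed.

Lemma pow4_gt0 n : 0 < (4 : R) ^+ n.
Proof. by rewrite exprn_gt0. Qed.

Lemma fsq_bnd n (z : R) : 0 <= z <= 1 ->
  z ^+ 2 <= fsq n z <= z ^+ 2 + 1 / (4 * 4 ^+ n).
Proof.
move=> h; rewrite fsq_eq //; have /andP[q0 q1] := q_bnd (Tn01 n h).
have p := pow4_gt0 n; move: p; set X := (4 : R) ^+ n => p.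
apply/andP; split.
  by rewrite lerDl divr_ge0 // ltW.
rewrite lerD2l ler_pdivrMr //.
have -> : 1 / (4 * X) * X = 1/4 by field; rewrite gt_eqF.
exact q1.
Qed.

Definition Mm m (c y : R) : R := 2 * fsq m ((c + y) / 2) - (fsq m c + fsq m y) / 2.

Lemma Mm_err m (c y : R) : 0 <= c <= 1 -> 0 <= y <= 1 ->
  `|Mm m c y - c * y| <= 1 / (2 * 4 ^+ m).
Proof.
move=> hc hy.
have hz : 0 <= (c + y) / 2 <= 1.
  by move/andP: hc => [? ?]; move/andP: hy => [? ?]; apply/andP; split; lra.
have /andP[a1 a2] := fsq_bnd m hz.
have /andP[b1 b2] := fsq_bnd m hc.
have /andP[c1 c2] := fsq_bnd m hy.
have p := pow4_gt0 m.
have e : 1 / (2 * 4 ^+ m) = 2 * (1 / (4 * 4 ^+ m)) :> R.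
  by field; rewrite gt_eqF.
move: a1 a2 b1 b2 c1 c2; rewrite e /Mm; set E := 1 / (4 * 4 ^+ m).
have E0 : 0 <= E by rewrite divr_ge0 // mulr_ge0 // ltW.
move=> a1 a2 b1 b2 c1 c2.
have -> : 2 * fsq m ((c + y) / 2) - (fsq m c + fsq m y) / 2 - c * y =
  2 * (fsq m ((c + y) / 2) - ((c + y) / 2) ^+ 2) - ((fsq m c - c ^+ 2) + (fsq m y - y ^+ 2)) / 2.
  by field.
clearbody E. move: a1 a2 b1 b2 c1 c2. generalize (fsq m ((c + y) / 2)) (fsq m c) (fsq m y) => A B C. generalize (((c + y) / 2) ^+ 2) (c ^+ 2) (y ^+ 2) => A2 B2 C2 *. rewrite ler_norml; apply/andP; split; lra.
Qed.

Definition clipv (p : R) := relu p - relu (p - 1).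

Lemma clipv_err (p P : R) : 0 <= P <= 1 -> `|clipv p - P| <= `|p - P|.
Proof.
move=> /andP[h0 h1]; rewrite /clipv.
case: (lerP p 0) => hp.
  rewrite relu_0 // relu_0; last lra.
  rewrite (ler0_norm (_ : p - P <= 0)); last lra.
  rewrite (ler0_norm (_ : 0 - 0 - P <= 0)); lra.
case: (lerP p 1) => hp1.
  by rewrite relu_id ?(ltW hp) // (@relu_0 (p - 1)) ?subr0 //; lra.
rewrite relu_id ?(ltW hp) // relu_id; last lra.
rewrite (ger0_norm (_ : 0 <= p - P)); last lra.
rewrite (ger0_norm (_ : 0 <= p - (p - 1) - P)); lra.
Qed.

Lemma clipv01 (p : R) : 0 <= clipv p <= 1.
Proof.
rewrite /clipv; case: (lerP p 0) => hp.
  rewrite relu_0 // relu_0; [rewrite subr0 lexx ler01 // | lra].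
case: (lerP p 1) => hp1.
  rewrite relu_id ?(ltW hp) // (@relu_0 (p - 1)) ?subr0; last lra.
  by apply/andP; split => //; apply: ltW.
rewrite relu_id ?(ltW hp) // relu_id; last lra.
apply/andP; split; lra.
Qed.

Fixpoint pseq m (x : nat -> R) (k : nat) : R :=
  if k is k'.+1 then Mm m (clipv (pseq m x k')) (x k) else x 0%N.

Lemma pseq_err m (x : nat -> R) (k : nat) :
  (forall i, (i <= k)%N -> 0 <= x i <= 1) ->
  `|clipv (pseq m x k) - \prod_(i < k.+1) x i| <= k%:R / (2 * 4 ^+ m).
Proof.
elim: k => [|k IH] hx.
  rewrite big_ord1 /= mul0r.
  have := clipv_err (x 0%N) (hx 0%N (leqnn _)); by rewrite subrr normr0.
rewrite big_ord_recr /=.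
set P := \prod_(i < k.+1) x _.
have hP : 0 <= P <= 1.
  apply/andP; split; first by apply: prodr_ge0 => i _; case/andP: (hx i (ltnW (ltn_ord i))).
  by apply: prodr_ile1 => i _; apply: hx; apply: ltnW; apply: (ltn_ord i).
have hxk := hx k.+1 (leqnn _).
have hPk : 0 <= P * x k.+1 <= 1.
  move/andP: hP => [? ?]; move/andP: hxk => [? ?]; apply/andP; split; nra.
apply: le_trans (clipv_err _ hPk) _.
have IH' := IH (fun i hi => hx i (leqW hi)).
have M := Mm_err m (clipv01 (pseq m x k)) hxk.
set c := clipv (pseq m x k) in IH' M *. clearbody c.
rewrite (_ : Mm m c (x k.+1) - P * x k.+1 = (Mm m c (x k.+1) - c * x k.+1) + (c - P) * x k.+1); last ring.
apply: le_trans (ler_normD _ _) _.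
rewrite normrM (ger0_norm (proj1 (andP hxk))).
have : `|c - P| * x k.+1 <= `|c - P|.
  by rewrite ler_piMr //; case/andP: hxk.
move=> h1.
rewrite -natr1 mulrDl [X in X <= _]addrC; apply: lerD => //.
exact: le_trans h1 IH'.
Qed.

End Math.

Section Net.
Variable R : realType.
Variables (d m W : nat).
Hypothesis hd : (1 < d)%N.
Hypothesis hW : (d + 9 <= W)%N.

Definition S := m.+2.
Definition LL := (d.-1 * S).+2.

Definition crow : seq (nat * R) := [:: (d.+2, 2); ((d + 5)%N, -(1/2)); ((d + 8)%N, -(1/2))].
Definition rin (k c : nat) : seq (nat * R) :=
  match c with
  | 0 => [:: (d, 1/2); (d.+1, -(1/2)); (k.+1, 1/2)]
  | 1 => [:: (d, 1); (d.+1, -1)]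
  | _ => [:: (k.+1, 1)] end.
Definition ebias (e : nat) : R := if e == 1%N then -(1/2) else 0.
Definition rstep (s c e : nat) : seq (nat * R) :=
  let base := (d + c * 3)%N in
  if e == 2%N then [:: (base.+2, 1); (base, -(2 / 4 ^+ s)); (base.+1, 4 / 4 ^+ s)]
  else [:: (base, 2); (base.+1, -4)].

Definition rowf (l i : nat) : seq (nat * R) * R :=
  if l == LL then (if i == 0%N then ([:: (d, 1); (d.+1, -1)], 0) else ([::], 0))
  else if (i < d)%N then ([:: (i, 1)], 0)
  else let r := l.-1 in let k := (r %/ S)%N in let j := (r %% S)%N in
  if j == 0%N then
    (let rr := if k == 0%N then [:: (0%N, 1)] else crow in
     if i == d then (rr, 0) else if i == d.+1 then (rr, -1) else ([::], 0))
  else let s := j.-1 in let o := (i - d)%N in let c := (o %/ 3)%N in let e := (o %% 3)%N in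
    if (c < 3)%N then ((if s == 0%N then rin k c else rstep s c e), ebias e)
    else ([::], 0).

Definition ww (l i j : nat) : R := \sum_(p <- (rowf l i).1) (if p.1 == j then p.2 else 0).
Definition bb (l i : nat) : R := (rowf l i).2.

Lemma sum_sparse (s : seq (nat * R)) n (h : nat -> R) : all (fun p => p.1 < n)%N s ->
  \sum_(j < n) (\sum_(p <- s) (if p.1 == j then p.2 else 0)) * h j = \sum_(p <- s) p.2 * h p.1.
Proof.
elim: s => [|p s IH] /=; first by rewrite big_nil; under eq_bigr do rewrite big_nil mul0r; rewrite big1.
move=> /andP[hp hs].
under eq_bigr => j _ do rewrite big_cons mulrDl.
rewrite big_split /= IH // big_cons; congr (_ + _).
rewrite (bigD1 (Ordinal hp)) //= eqxx big1 ?addr0 // => j hj.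
case: eqP => [e|]; last by rewrite mul0r.
by move: hj; rewrite -(inj_eq val_inj) /= e eqxx.
Qed.


Lemma S_gt0 : (0 < S)%N. Proof. by []. Qed.
Lemma LL_ge : (S.+2 <= LL)%N.
Proof. rewrite /LL; have : (1 <= d.-1)%N by case: d hd => [|[|n]]. move=> h1. by rewrite !ltnS leq_pmull. Qed.

Lemma ldh l : (0 < l < LL)%N -> layer_dim d W LL l = W.
Proof. by case/andP => h1 h2; rewrite /layer_dim gtn_eqF // h2. Qed.
Lemma ld0 : layer_dim d W LL 0 = d.
Proof. by []. Qed.

Definition rrk (k : nat) : seq (nat * R) := if k == 0%N then [:: (0%N, 1)] else crow.

Lemma rowf_clip k i : (k <= d.-1)%N -> (d <= i)%N ->
  rowf (k * S).+1 i = if i == d then (rrk k, 0) else if i == d.+1 then (rrk k, -1) else ([::], 0).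
Proof.
move=> hk hi; rewrite /rowf.
have -> : ((k * S).+1 == LL) = false.
  have h1 : (k * S <= d.-1 * S)%N by rewrite leq_mul2r hk orbT.
  by apply: ltn_eqF; rewrite /LL; lia.
rewrite ltnNge hi /= mulnK // modnMl /=.
by [].
Qed.

Lemma rowf_step k s c e : (k < d.-1)%N -> (s <= m)%N -> (c < 3)%N -> (e < 3)%N ->
  rowf (k * S + s).+2 (d + c * 3 + e) = ((if s == 0%N then rin k c else rstep s c e), ebias e).
Proof.
move=> hk hs hc he; rewrite /rowf.
have -> : ((k * S + s).+2 == LL) = false.
  apply: ltn_eqF; rewrite /LL !ltnS.
  have h1 : (k.+1 * S <= d.-1 * S)%N by rewrite leq_mul2r hk orbT.
  apply: leq_trans h1; rewrite mulSn addnC ltn_add2r /S; lia.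
have -> : (d + c * 3 + e < d)%N = false by lia.
have -> : (k * S + s).+2.-1 = (k * S + s.+1)%N by rewrite /= addnS.
have hs1 : (s.+1 < S)%N by rewrite /S ltnS ltnS.
rewrite divnMDl // modnMDl (divn_small hs1) (modn_small hs1) addn0 /=.
rewrite -addnA addKn divnMDl // modnMDl (divn_small he) (modn_small he) addn0 hc.
by [].
Qed.

Variable x : nat -> R.
Hypothesis hx : forall i, (i < d)%N -> 0 <= x i <= 1.
Local Notation H := (fnn_hidden d W LL ww bb x).

Lemma hid_succ l i : all (fun p => p.1 < layer_dim d W LL l)%N (rowf l.+1 i).1 ->
  H l.+1 i = relu (\sum_(p <- (rowf l.+1 i).1) p.2 * H l p.1 + (rowf l.+1 i).2).
Proof. by move=> h; rewrite /= /ww sum_sparse. Qed.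

Lemma carry l i : (l < LL)%N -> (i < d)%N -> H l i = x i.
Proof.
elim: l => [//|l IH] hl hi.
rewrite hid_succ; last first.
  rewrite /rowf (ltn_eqF hl) hi /= andbT.
  case: l {IH} hl => [|l] hl; first by rewrite ld0.
  by rewrite ldh ?hl //; lia.
rewrite /rowf (ltn_eqF hl) hi /= big_cons big_nil IH ?(ltnW hl) // mul1r !addr0.
by rewrite relu_id //; case/andP: (hx hi).
Qed.

Definition zc k c : R := if c == 0%N then (clipv (pseq m x k) + x k.+1) / 2
  else if c == 1%N then clipv (pseq m x k) else x k.+1.
Definition hval s (z : R) e : R := if e == 0%N then Tn s z else if e == 1%N then relu (Tn s z - 1/2) else fsq s z.

Lemma zc01 k c : (k < d.-1)%N -> 0 <= zc k c <= 1.
Proof.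
move=> hk; have hk1 : (k.+1 < d)%N by lia.
have := hx hk1; have := clipv01 (pseq m x k).
rewrite /zc; case: ifP => _; last by case: ifP.
move=> /andP[? ?] /andP[? ?]; apply/andP; split; lra.
Qed.

Definition clipP k := H (k * S).+1 d = relu (pseq m x k) /\ H (k * S).+1 d.+1 = relu (pseq m x k - 1).
Definition stepP k s := forall c e, (c < 3)%N -> (e < 3)%N -> H (k * S + s).+2 (d + c * 3 + e) = hval s (zc k c) e.

Lemma clip0 : clipP 0.
Proof.
rewrite /clipP mul0n.
have e1 : rowf 1 d = ([:: (0%N, 1)], 0).
  by rewrite (rowf_clip (k:=0)) ?leq0n ?eqxx.
have e2 : rowf 1 d.+1 = ([:: (0%N, 1)], -1).
  by rewrite (rowf_clip (k:=0)) ?leq0n // (gtn_eqF (ltnSn d)) eqxx.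
have h4 := LL_ge.
have x0 : H 0 0 = x 0%N by [].
split; rewrite hid_succ ?e1 ?e2 /= ?ld0 ?andbT; try lia;
  by rewrite big_cons big_nil mul1r ?addr0.
Qed.
Lemma hkS k : (k < d.-1)%N -> (k * S + S <= d.-1 * S)%N.
Proof. by move=> hk; rewrite addnC -mulSn leq_mul2r hk orbT. Qed.
Lemma hS2 : (2 <= S)%N. Proof. by []. Qed.

Lemma step0 k : (k < d.-1)%N -> clipP k -> stepP k 0.
Proof.
move=> hk [hA hB] c e hc he.
have hk1 : (k.+1 < d)%N by lia.
have h1 := hkS hk; have h2 := hS2.
rewrite hid_succ rowf_step //=; last first.
  rewrite ldh; last by rewrite /LL; lia.
  by case: c hc => [|[|[|c]]] //= _; rewrite ?andbT; lia.
rewrite addn0.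
have pre : \sum_(p <- rin k c) p.2 * H (k * S).+1 p.1 = zc k c.
  have hx1 : H (k * S).+1 k.+1 = x k.+1 by rewrite carry //; rewrite /LL; lia.
  move: hA hB hx1; generalize (H (k * S).+1) => h hA hB hx1.
  case: c hc => [|[|[|c]]] // _; rewrite /rin /zc /= !big_cons big_nil ?hA ?hB ?hx1 /clipv /=; ring.
rewrite pre /hval /ebias.
have /andP[z0 z1] := zc01 c hk.
by case: e he => [|[|[|e]]] //= _; rewrite ?addr0 // relu_id.
Qed.
Lemma step_succ k s : (k < d.-1)%N -> (s < m)%N -> stepP k s -> stepP k s.+1.
Proof.
move=> hk hs IH c e hc he.
have h1 := hkS hk; have h2 := hS2.
have ea : (k * S + s.+1).+2 = (k * S + s).+1.+2 by rewrite addnS.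
rewrite [in LHS]addnS hid_succ; last first.
  rewrite -ea rowf_step //= ldh; last by rewrite /LL /S in h1 *; lia.
  by rewrite /rstep; case: ifP => _ /=; rewrite ?andbT; lia.
have v0 := IH c 0 hc isT; have v1 := IH c 1 hc isT; have v2 := IH c 2 hc isT.
rewrite addn0 in v0; rewrite addn1 in v1; rewrite addn2 in v2.
move: v0 v1 v2; generalize (H (k * S + s).+2) => h v0 v1 v2.
rewrite -ea rowf_step //=.
have /andP[z0 z1] := zc01 c hk.
have /andP[t0 t1] := Tn01 s (zc01 c hk).
set z := zc k c in v0 v1 v2 t0 t1 *.
have hT : 2 * Tn s z + -4 * relu (Tn s z - 1/2) = T (Tn s z).
  by rewrite /T (relu_id t0); ring.
rewrite /rstep /hval /ebias.
case: e he => [|[|[|e]]] //= _; rewrite !big_cons big_nil /= ?v0 ?v1 ?v2 /hval /=.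
- rewrite !addr0 hT relu_id //.
  by have /andP[] := T01 (Tn01 s (zc01 c hk)).
- by rewrite !addr0 hT.
- rewrite !addr0 (mul1r (fsq s z)).
  have /andP[f0 _] := fsq_bnd s.+1 (zc01 c hk).
  have -> : fsq s z + (-(2 / 4 ^+ s.+1) * Tn s z + 4 / 4 ^+ s.+1 * relu (Tn s z - 1/2))
     = fsq s z - T (Tn s z) / 4 ^+ s.+1 by rewrite /T (relu_id t0); ring.
  rewrite relu_id //; exact: le_trans (sqr_ge0 _) f0.
Qed.
Lemma clip_next k : (k < d.-1)%N -> stepP k m -> clipP k.+1.
Proof.
move=> hk IH.
have h1 := hkS hk; have h2 := hS2.
have ea : (k.+1 * S).+1 = (k * S + m).+3 by rewrite mulSn /S; lia.
have v0 := IH 0 2 isT isT; have v1 := IH 1 2 isT isT; have v2 := IH 2 2 isT isT.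
rewrite (_ : (d + 0 * 3 + 2 = d.+2)%N) in v0; last by lia.
rewrite (_ : (d + 1 * 3 + 2 = d + 5)%N) in v1; last by lia.
rewrite (_ : (d + 2 * 3 + 2 = d + 8)%N) in v2; last by lia.
have hk1 : (k.+1 <= d.-1)%N by [].
have hd1 : (d <= d.+1)%N by [].
have hpre : forall i, (d <= i)%N -> (rowf (k * S + m).+3 i).1 = if (i == d) || (i == d.+1) then crow else [::].
  move=> i hi; rewrite -ea rowf_clip // /rrk /=.
  by case: ifP => //= _; case: ifP.
rewrite /clipP ea.
have hall : forall i, (d <= i)%N -> all (fun p => p.1 < layer_dim d W LL (k * S + m).+2)%N (rowf (k * S + m).+3 i).1.
  move=> i hi; rewrite hpre // ldh; last by rewrite /LL /S in h1 *; lia.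
  by case: ifP => _ //=; rewrite andbT; lia.
rewrite !hid_succ ?hall //.
move: v0 v1 v2; generalize (H (k * S + m).+2) => h v0 v1 v2.
rewrite !hpre // eqxx /= (gtn_eqF (ltnSn d)) eqxx /=.
rewrite -ea !rowf_clip // eqxx (gtn_eqF (ltnSn d)) eqxx /=.
rewrite /crow !big_cons big_nil /= v0 v1 v2 /hval /= !addr0.
have -> : 2 * fsq m (zc k 0) + (- (1 / 2) * fsq m (zc k 1) + - (1 / 2) * fsq m (zc k 2)) = pseq m x k.+1.
  by rewrite /= /Mm /zc /=; field.
by [].
Qed.

Lemma clip_all k : (k <= d.-1)%N -> clipP k.
Proof.
elim: k => [_|k IH hk]; first exact: clip0.
have hk' : (k < d.-1)%N by [].
apply: clip_next => //.
have : forall s, (s <= m)%N -> stepP k s.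
  elim => [_|s IHs hs]; first exact: step0 (IH (ltnW hk')).
  by apply: step_succ => //; apply: IHs; apply: ltnW.
by apply.
Qed.

Lemma out_val : fnn_eval d W LL ww bb x = clipv (pseq m x d.-1).
Proof.
have h4 := LL_ge.
have eL : LL.-1 = (d.-1 * S).+1 by [].
have [hA hB] := clip_all (leqnn d.-1).
rewrite /fnn_eval eL.
move: hA hB; generalize (H (d.-1 * S).+1) => h hA hB.
rewrite /bb /ww sum_sparse; last first.
  rewrite /rowf eqxx /= ldh; last by rewrite /LL; lia.
  rewrite andbT; lia.
rewrite /rowf eqxx /= !big_cons big_nil /= hA hB /clipv.
by rewrite addr0 addr0 mul1r; ring.
Qed.
Lemma div4_le (a : R) s : 0 <= a -> 0 <= a / 4 ^+ s <= a.
Proof.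
move=> a0; have p := pow4_gt0 R s.
apply/andP; split; first by rewrite divr_ge0 // ltW.
by rewrite ler_pdivrMr // ler_peMr // exprn_ege1 // ler1n.
Qed.

Lemma row_bnd l i : \sum_(p <- (rowf l i).1) `|p.2| <= 7 /\ `|(rowf l i).2| <= 1.
Proof.
have n2 : `|(1/2 : R)| = 1/2 by rewrite ger0_norm //; lra.
have n2' : `|(2 : R)| = 2 by rewrite ger0_norm.
have n4 : `|(4 : R)| = 4 by rewrite ger0_norm.
have eb : forall e, `|ebias e| <= 1.
  by move=> e; rewrite /ebias; case: ifP => _; rewrite ?normrN ?n2 ?normr0; lra.
rewrite /rowf; repeat case: ifP => _.
all: rewrite /=; split; last (try exact: eb); rewrite ?normrN ?normr0 ?normr1 //.
all: rewrite /= ?big_cons ?big_nil /= ?normrN ?normr1 ?normr0 ?n2 ?n2' ?n4; try lra.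
- by case: (_ %/ 3)%N => [|[|[|?]]]; rewrite /rin /= ?big_cons ?big_nil /= ?normrN ?normr1 ?n2; lra.
- rewrite /rstep; case: ifP => _; rewrite /= ?big_cons ?big_nil /= ?normrN ?normr1 ?n2' ?n4; last lra.
  move: ((l.-1 %% S).-1) => s.
  have /andP[a0 a1] := div4_le s (ler0n R 2).
  have /andP[b0 b1] := div4_le s (ler0n R 4).
  rewrite !ger0_norm //; lra.
Qed.

Lemma wbnd C : 7 <= C -> fnn_weight_bounded d W LL ww bb C.
Proof.
move=> hC l _ i _; have [h1 h2] := row_bnd l i.
split; first by rewrite /bb; lra.
move=> j _; rewrite /ww.
apply: le_trans (ler_norm_sum _ _ _) _.
apply: (@le_trans _ _ (\sum_(p <- (rowf l i).1) `|p.2|)); last lra.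
apply: ler_sum => p _; case: ifP => _ //; by rewrite normr0.
Qed.

Lemma err_main (eps : R) : 0 < eps -> d%:R / eps <= 2 ^+ m ->
  `|fnn_eval d W LL ww bb x - \prod_(i < d) x i| <= eps.
Proof.
move=> he hm.
rewrite out_val.
have hx' : forall i, (i <= d.-1)%N -> 0 <= x i <= 1.
  by move=> i hi; apply: hx; move: hd hi; clear; lia.
have := pseq_err m hx'.
have -> : d.-1.+1 = d by move: hd; clear; lia.
move=> h; apply: le_trans h _.
have p1 : 1 <= (2 : R) ^+ m by rewrite exprn_ege1 // ler1n.
have e4 : (4 : R) ^+ m = 2 ^+ m * 2 ^+ m by rewrite -exprMn -natrM.
rewrite e4; move: p1 hm; set P := (2 : R) ^+ m => p1 hm.
have P0 : 0 < P by lra.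
have PP : 0 < 2 * (P * P) by rewrite !mulr_gt0.
rewrite ler_pdivrMr //.
rewrite ler_pdivrMr // in hm.
have hd1 : (d.-1%:R : R) <= d%:R by rewrite ler_nat; clear; lia.
have h3 : 0 <= (P * eps) * (2 * P - 1) by apply: mulr_ge0; [apply: mulr_ge0; lra | lra].
nra.
Qed.
End Net.

Lemma ln2_ge (R : realType) : 1/2 <= ln (2:R).
Proof.
have h := expR_ge1Dx (-(1/2) : R); rewrite expRN in h.
have hp := expR_gt0 (1/2 : R).
have h1 := ler_wpM2l (ltW hp) h.
rewrite mulfV ?lt0r_neq0 // in h1.
have h2 : expR (1/2) <= (2:R) by lra.
rewrite -{1}(expRK (1/2)) ler_ln ?posrE //.
Qed.

Lemma predn_contra m : (1 <= m)%N -> (m <= m.-1)%N -> False.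
Proof. lia. Qed.
Lemma three_pow a : (1 <= a)%N -> (2 <= 3 ^ a - 1)%N.
Proof. move=> ha; have := leq_pexp2l (isT : (0 < 3)%N) ha; rewrite expn1; lia. Qed.

Unset Implicit Arguments.

Theorem lemma13 (R : realType) (d : nat) (hd : (1 < d)%N) :
  exists C : R, forall eps : R, 0 < eps ->
    ((1 < mtp_a d)%N ->
       eps <= (3 ^ mtp_a d - 1)%N%:R / (3 ^ (mtp_a d).-1 - 1)%N%:R) ->
    exists (L : nat) (w : nat -> nat -> nat -> R) (b : nat -> nat -> R),
      [/\ (1 <= L)%N,
          L%:R <= C * Num.max 1 (ln ((3 ^ mtp_a d - 1)%N%:R / (2 * eps))),
          fnn_weight_bounded d (21 * 2 ^ (mtp_a d).-1) L w b C &
          forall x : nat -> R, (forall i, (i < d)%N -> 0 <= x i <= 1) ->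
            `|fnn_eval d (21 * 2 ^ (mtp_a d).-1) L w b x - \prod_(i < d) x i|
              <= eps].
Proof.
have ha : (1 <= mtp_a d)%N by rewrite /mtp_a up_log_gt0 hd.
have hdW : (d + 9 <= 21 * 2 ^ (mtp_a d).-1)%N.
  have h := up_logP d (isT : (1 < 2)%N); rewrite -/(mtp_a d) -(prednK ha) expnS in h.
  have h2 := expn_gt0 2 (mtp_a d).-1; lia.
set D : R := d%:R.
have D2 : 2 <= D by rewrite /D (ler_nat R 2 d).
have lD : 0 <= ln D by rewrite ln_ge0 //; lra.
have DlD : 0 <= D * ln D by rewrite mulr_ge0 //; lra.
exists (9 + 5 * D + 2 * (D * ln D)).
move=> eps he _.
set lam := ln ((3 ^ mtp_a d - 1)%N%:R / (2 * eps)).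
set mx := Num.max 1 lam.
have mx1 : 1 <= mx by rewrite /mx le_max lexx.
have mxl : lam <= mx by rewrite /mx le_max lexx orbT.
case: (lerP 1 eps) => he1.
  exists 1%N, (fun _ _ _ => 0), (fun _ _ => 0); split => //.
  - by rewrite mulr_ege1 //; lra.
  - by move=> l _ i _; split; [|move=> j _]; rewrite normr0; lra.
  - move=> x hx; rewrite /fnn_eval big1 ?add0r ?addr0 => [|j _]; last by rewrite mul0r.
    rewrite normrN ger0_norm.
      apply: le_trans he1; apply: prodr_ile1 => i _; exact: hx.
    by apply: prodr_ge0 => i _; case/andP: (hx i (ltn_ord i)).
have ex : exists n, d%:R / eps <= (2 : R) ^+ n.
  by exists (Num.Def.archi_bound (d%:R / eps)); apply: ltW; apply: upper_nthrootP.
case: (ex_minnP ex) => m hm hmin.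
exists (LL d m), (ww R d m), (bb R d m); split.
- by [].
- have yD : 1 < D / eps.
    by rewrite ltr_pdivlMr //; nra.
  have m1 : (1 <= m)%N.
    case: m hm {hmin} => // hm; rewrite expr0 in hm; lra.
  have hlt : (2 : R) ^+ m.-1 < D / eps.
    case: (ltrP ((2 : R) ^+ m.-1) (D / eps)) => // h.
    by case: (predn_contra m1 (hmin _ h)).
  have D0 : 0 < D by lra.
  have Dp : D / eps \is Num.pos by rewrite posrE divr_gt0.
  have p2 : (2 : R) ^+ m.-1 \is Num.pos by rewrite posrE exprn_gt0.
  rewrite -(ltr_ln p2 Dp) lnXn // lnM ?posrE ?invr_gt0 // lnV ?posrE // in hlt.
  set M : R := m%:R.
  have eM : (m.-1)%:R = M - 1 by rewrite /M -{2}(prednK m1) -natr1; ring.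
  rewrite -[ln 2 *+ _]mulr_natr eM in hlt.
  have l2 := ln2_ge R.
  have M1 : 1 <= M by rewrite /M (ler_nat R 1 m).
  have hlam : - ln eps <= lam.
    have Q2 : 2 <= (3 ^ mtp_a d - 1)%N%:R :> R.
      by rewrite (ler_nat R 2) three_pow.
    rewrite -lnV ?posrE // /lam ler_ln ?posrE ?invr_gt0 ?divr_gt0 ?mulr_gt0 //; last lra.
    have -> : (3 ^ mtp_a d - 1)%N%:R / (2 * eps) = ((3 ^ mtp_a d - 1)%N%:R / 2) * eps^-1.
      by field; rewrite gt_eqF.
    by apply: ler_peMl; [rewrite invr_ge0; lra | rewrite ler_pdivlMr //; lra].
  have hMb : M - 1 < 2 * ln D + 2 * lam.
    have h3 : 1/2 * (M - 1) <= ln 2 * (M - 1) by apply: ler_wpM2r; lra.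
    lra.
  have eL : (LL d m)%:R = (D - 1) * (M + 2) + 2 :> R.
    rewrite /LL /S -addn2 natrD natrM -addn2 natrD.
    have -> : (d.-1)%:R = D - 1 by rewrite /D -{2}(prednK (ltnW hd)) -natr1; ring.
    by [].
  rewrite eL.
  have s1 : (D - 1) * (M + 2) <= D * (M + 2) by nra.
  have s2 : D * (M + 2) <= D * (3 + 2 * ln D + 2 * lam) by apply: ler_wpM2l; lra.
  have s3 : D * lam <= D * mx by apply: ler_wpM2l; lra.
  have s4 : 9 + 3 * D + 2 * (D * ln D) <= (9 + 3 * D + 2 * (D * ln D)) * mx.
    by apply: ler_peMr => //; lra.
  have s5 : D <= D * mx by apply: ler_peMr; lra.
  have e1 : (9 + 5 * D + 2 * (D * ln D)) * mx = (9 + 3 * D + 2 * (D * ln D)) * mx + 2 * (D * mx) by ring.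
  have e2 : D * (3 + 2 * ln D + 2 * lam) = 3 * D + 2 * (D * ln D) + 2 * (D * lam) by ring.
  rewrite e1; rewrite e2 in s2.
  move: s1 s2 s3 s4 s5; generalize (D * mx) (D * lam) (D * ln D) ((9 + 3 * D + 2 * (D * ln D)) * mx) ((D - 1) * (M + 2)) (D * (M + 2)).
  move=> *; lra.
- by apply: wbnd; lra.
- move=> x hx; exact: err_main.
Qed.
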